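(* Let $p\in(0,1)$ and $p_{-}=\min\{p,1/2\}$. For the probabilistic triad dynamics with parameter $p$ on the triadic cycle $TC_{n}$, the time to social balance $\tau_{SB}(TC_n)$ is $O(n/p_{-})$.
   Context: Edges are labeled $\pm1$; a triangle is balanced if the product of its edge labels is $1$. Probabilistic triad dynamics with parameter $p$: while an imbalanced triangle exists, choose an imbalanced triangle $T$ uniformly at random; if $T$ has a single negative edge $e$, then with probability $p$ turn $e$ positive and with probability $1-p$ turn one of the other two edges of $T$ (chosen at random) negative; otherwise ($T$ has three negative edges) change the label of a uniformly random edge of $T$. The triadic cycle $TC_n$ is the graph consisting of $n$ triangles chained together, consecutive triangles sharing an edge, with the two free edges $AB$ and $CD$ of the extreme triangles of the chain glued by identifying $A\equiv C$, $B\equiv D$; thus each triangle shares one edge with each of its two neighbours and has one edge belonging to no other triangle. For such a graph, $\tau_{SB}(G)$ is the maximum over all initial labelings $s$ of the expected number of steps for the dynamics started at $s$ to reach a state with no imbalanced triangle. *)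

(* Defs.v *)
From HB Require Import structures.
From mathcomp Require Import all_boot all_order all_algebra.
Set Implicit Arguments. Unset Strict Implicit. Unset Printing Implicit Defensive.
Import Order.TTheory GRing.Theory Num.Theory.
Local Open Scope ring_scope.

(* The triadic cycle TC_n, described through its triangle/edge incidence:
   triangles are indexed by 'I_n (cyclically); edge [inl i] is the edge shared
   by triangle i and triangle i+1 (mod n); edge [inr i] is the edge belonging
   only to triangle i. *)
Definition tc_edge (n : nat) : finType := ('I_n + 'I_n)%type.

Definition tri_edges (n : nat) (t : 'I_n) : seq (tc_edge n) :=
  [:: inl (ord_pred t); inl t; inr t].

(* A labeling: [true] means the edge is labeled -1, [false] means +1. *)
Definition labeling (n : nat) := {ffun tc_edge n -> bool}.

Definition negs n (s : labeling n) (t : 'I_n) : nat :=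
  count (fun e => s e) (tri_edges t).

(* imbalanced iff product of labels is -1 iff odd number of negative edges *)
Definition imbalanced n (s : labeling n) (t : 'I_n) : bool := odd (negs s t).

Definition balanced_state n (s : labeling n) : bool :=
  [forall t, ~~ imbalanced s t].

Definition flip n (s : labeling n) (e : tc_edge n) : labeling n :=
  [ffun e' => if e' == e then ~~ s e' else s e'].

Section Dynamics.
Variable R : realFieldType.

Definition tri_trans (p : R) n (s : labeling n) (t : 'I_n) (s' : labeling n) : R :=
  if negs s t == 1%N then
    \sum_(e <- tri_edges t)
       (if s e then p else (1 - p) / 2) * (flip s e == s')%:R
  else (* three negative edges: flip a uniformly random edge *)
    \sum_(e <- tri_edges t) 3%:R^-1 * (flip s e == s')%:R.

Definition trans (p : R) n (s s' : labeling n) : R :=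
  if balanced_state s then (s == s')%:R
  else #|[pred t | imbalanced s t]|%:R^-1 *
       \sum_(t | imbalanced s t) tri_trans p s t s'.

Fixpoint dist (p : R) n (s0 : labeling n) (k : nat) : {ffun labeling n -> R} :=
  match k with
  | 0 => [ffun s => (s == s0)%:R]
  | k.+1 => [ffun s' => \sum_(s : labeling n) dist p s0 k s * trans p s s']
  end.

(* P_{s0}(T > k), T = first time a state with no imbalanced triangle is reached *)
Definition tail_prob (p : R) n (s0 : labeling n) (k : nat) : R :=
  \sum_(s : labeling n | ~~ balanced_state s) dist p s0 k s.

(* E_{s0}[T] = sum_{k>=0} P(T > k) <= B, i.e. every partial sum is <= B *)
Definition expected_time_le (p : R) n (s0 : labeling n) (B : R) : Prop :=
  forall K : nat, \sum_(k < K) tail_prob p s0 k <= B.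

Definition tauSB_le (p : R) (n : nat) (B : R) : Prop :=
  forall s0 : labeling n, expected_time_le p s0 B.
End Dynamics.

(* Main.v *)
Require Import Defs.
From HB Require Import structures.
From mathcomp Require Import all_boot all_order all_algebra.
From mathcomp Require Import zify ring lra.
Import Order.TTheory GRing.Theory Num.Theory.
Local Open Scope ring_scope.

Lemma ord_pred_neq n (y : 'I_n) : (1 < n)%N -> ord_pred y != y.
Proof.
move=> n1; apply/eqP => /(congr1 val) /=.
case: n y n1 => [|[|n]] [y hy] //= _; rewrite addnS /=.
case: y hy => [|k] hk.
  rewrite add0n modn_small //; lia.
rewrite addSnnS modnDr modn_small; lia.
Qed.

Lemma ordS_neq n (y : 'I_n) : (1 < n)%N -> ordS y != y.
Proof.
move=> n1; apply/eqP => h.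
have := ord_pred_neq _ y n1. by rewrite -{1}h ordSK eqxx.
Qed.

Lemma inl_eq n (a b : 'I_n) : (@inl 'I_n 'I_n a == inl b) = (a == b).
Proof. by apply/eqP/eqP => [[]|->]. Qed.
Lemma inr_eq n (a b : 'I_n) : (@inr 'I_n 'I_n a == inr b) = (a == b).
Proof. by apply/eqP/eqP => [[]|->]. Qed.
Lemma inl_inr n (a b : 'I_n) : (@inl 'I_n 'I_n a == inr b) = false.
Proof. by apply/eqP. Qed.
Lemma inr_inl n (a b : 'I_n) : (@inr 'I_n 'I_n a == inl b) = false.
Proof. by apply/eqP. Qed.
Set Implicit Arguments.
Section Proof.
Variable R : realFieldType.
Variable p : R.
Hypothesis hp : 0 < p < 1.

Definition wt (a b c : bool) : R :=
  (if odd (a + b + c) then (if c && ~~ a && ~~ b then 7 - 7 * p else 5) else 0)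
  + (b : nat)%:R + (c : nat)%:R.

Definition gt n (s : labeling n) (u : 'I_n) : R :=
  wt (s (inl (ord_pred u))) (s (inl u)) (s (inr u)).

Definition Phi n (s : labeling n) : R := \sum_u gt s u.

Lemma wt_bounds a b c : 0 <= wt a b c <= 9.
Proof.
case/andP: hp => h1 h2.
by case: a; case: b; case: c; rewrite /wt /=; apply/andP; split; lra.
Qed.

Lemma Phi_ge0 n (s : labeling n) : 0 <= Phi s.
Proof. by apply: sumr_ge0 => u _; case/andP: (wt_bounds (s (inl (ord_pred u))) (s (inl u)) (s (inr u))). Qed.

Lemma Phi_le n (s : labeling n) : Phi s <= 9 * n%:R.
Proof.
rewrite /Phi.
have -> : 9 * n%:R = \sum_(u : 'I_n) (9 : R).
  by rewrite sumr_const card_ord mulr_natr.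
apply: ler_sum => u _.
by case/andP: (wt_bounds (s (inl (ord_pred u))) (s (inl u)) (s (inr u))).
Qed.

Lemma flipE n (s : labeling n) e e' :
  flip s e e' = if e' == e then ~~ s e' else s e'.
Proof. by rewrite ffunE. Qed.

Lemma Phi_flip n (s : labeling n) e :
  Phi (flip s e) = Phi s + \sum_(u | e \in tri_edges u) (gt (flip s e) u - gt s u).
Proof.
rewrite /Phi.
have -> : \sum_u gt (flip s e) u = \sum_u gt s u + \sum_u (gt (flip s e) u - gt s u).
  rewrite -big_split; apply: eq_bigr => u _ /=.
  by rewrite addrC subrK.
congr (_ + _).
rewrite (bigID (fun u => e \in tri_edges u)) /= [X in _ + X]big1 ?addr0 // => u.
rewrite /tri_edges !inE => hu.
rewrite /gt !flipE.
have h1 : (inl (ord_pred u) == e) = false.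
  by apply/negbTE; apply: contra hu => /eqP ->; rewrite eqxx.
have h2 : (@inl 'I_n 'I_n u == e) = false.
  by apply/negbTE; apply: contra hu => /eqP ->; rewrite eqxx orbT.
have h3 : (@inr 'I_n 'I_n u == e) = false.
  by apply/negbTE; apply: contra hu => /eqP ->; rewrite eqxx !orbT.
by rewrite h1 h2 h3 subrr.
Qed.

Lemma Phi_flip_inr n (s : labeling n) t :
  Phi (flip s (inr t)) = Phi s + (gt (flip s (inr t)) t - gt s t).
Proof.
rewrite Phi_flip; congr (_ + _).
rewrite (eq_bigl (fun u => u == t)) ?big_pred1_eq // => u.
by rewrite /tri_edges !inE !inr_eq !inr_inl eq_sym.
Qed.

Lemma Phi_flip_inl n (s : labeling n) j : (1 < n)%N ->
  Phi (flip s (inl j)) = Phi s + (gt (flip s (inl j)) j - gt s j)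
                         + (gt (flip s (inl j)) (ordS j) - gt s (ordS j)).
Proof.
move=> n1; rewrite Phi_flip -addrA; congr (_ + _).
rewrite (bigD1 j) /=; last by rewrite /tri_edges !inE eqxx orbT.
congr (_ + _).
rewrite (eq_bigl (fun u => u == ordS j)) ?big_pred1_eq // => u.
rewrite /tri_edges !inE !inl_eq !inl_inr orbF.
have -> : (j == ord_pred u) = (u == ordS j).
  by apply/eqP/eqP => [->|->]; rewrite ?ord_predK ?ordSK.
case: eqP => [->|_] /=; first by rewrite ordS_neq.
by rewrite eq_sym; case: (u == j).
Qed.

Definition coef n (s : labeling n) t (e : tc_edge n) : R :=
  if negs s t == 1%N then (if s e then p else (1 - p) / 2) else 3%:R^-1.

Lemma local_drift n (s : labeling n) t : (1 < n)%N -> imbalanced s t ->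
  \sum_(e <- tri_edges t) coef s t e * Phi (flip s e) <= Phi s - 1.
Proof.
move=> n1 imb.
rewrite /tri_edges !big_cons big_nil addr0.
rewrite (Phi_flip_inl _ (ord_pred t)) // ord_predK (Phi_flip_inl _ t) // Phi_flip_inr.
have h1 : (ord_pred (ord_pred t) == ord_pred t) = false by apply/negbTE/ord_pred_neq.
have h2 : (ord_pred t == t) = false by apply/negbTE/ord_pred_neq.
have h2' : (t == ord_pred t) = false by rewrite eq_sym h2.
have h3 : (ordS t == t) = false by apply/negbTE/ordS_neq.
rewrite /gt !flipE !inl_eq !inr_eq !inl_inr !inr_inl ordSK !eqxx h1 h2 h2' h3.
move: imb; rewrite /imbalanced /coef /negs /=.
move: (Phi s) (s (inl (ord_pred (ord_pred t)))) (s (inl (ord_pred t))) (s (inr (ord_pred t)))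
  (s (inl t)) (s (inr t)) (s (inl (ordS t))) (s (inr (ordS t))) => X A B C D E F G.
case/andP: hp => hp1 hp2.
case: A; case: B; case: C; case: D; case: E; case: F; case: G; rewrite /wt /= => // _; nra.
Qed.

Lemma sum_ind n (x : labeling n) (F : labeling n -> R) :
  \sum_(s' : labeling n) (x == s')%:R * F s' = F x.
Proof.
rewrite (bigD1 x) //= eqxx mul1r big1 ?addr0 // => s' hs.
by rewrite eq_sym (negbTE hs) mul0r.
Qed.

Lemma tri_exp n (s : labeling n) t (F : labeling n -> R) :
  \sum_(s' : labeling n) tri_trans p s t s' * F s' =
  \sum_(e <- tri_edges t) coef s t e * F (flip s e).
Proof.
have EQ : forall s', tri_trans p s t s' =
    \sum_(e <- tri_edges t) coef s t e * (flip s e == s')%:R.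
  by move=> s'; rewrite /tri_trans; case: ifP => h; apply: eq_bigr => e _; rewrite /coef h.
under eq_bigr do rewrite EQ big_distrl /=.
rewrite exchange_big /=; apply: eq_bigr => e _.
rewrite -sum_ind big_distrr /=; apply: eq_bigr => s' _; by rewrite mulrA.
Qed.

Lemma tri_trans_ge0 n (s : labeling n) t s' : 0 <= tri_trans p s t s'.
Proof.
case/andP: hp => hp1 hp2.
rewrite /tri_trans; case: ifP => _; apply: sumr_ge0 => e _; apply: mulr_ge0 => //.
  case: (s e); lra.
by rewrite invr_ge0 ler0n.
Qed.

Lemma trans_ge0 n (s s' : labeling n) : 0 <= trans p s s'.
Proof.
rewrite /trans; case: ifP => _; first by rewrite ler0n.
apply: mulr_ge0; first by rewrite invr_ge0 ler0n.
by apply: sumr_ge0 => t _; apply: tri_trans_ge0.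
Qed.

Lemma dist_ge0 n (s0 : labeling n) k s : 0 <= dist p s0 k s.
Proof.
elim: k s => [|k IH] s.
  by rewrite /dist ffunE ler0n.
rewrite /= ffunE; apply: sumr_ge0 => x _; apply: mulr_ge0 => //.
exact: trans_ge0.
Qed.

Lemma trans_drift n (s : labeling n) : (1 < n)%N ->
  \sum_(s' : labeling n) trans p s s' * Phi s' <= Phi s - (~~ balanced_state s)%:R.
Proof.
move=> n1; case hb: (balanced_state s) => /=;
  under eq_bigr do rewrite /trans hb.
  by rewrite sum_ind subr0.
set m := #|[pred t | imbalanced s t]|.
have mpos : (0 < m)%N.
  move/negbT: hb; rewrite /balanced_state negb_forall => /existsP [t ht].
  by apply/card_gt0P; exists t; rewrite inE negbK in ht *.
under eq_bigr do rewrite -mulrA big_distrl /=.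
rewrite -big_distrr /= exchange_big /=.
under eq_bigr do rewrite tri_exp.
apply: (@le_trans _ _ (m%:R^-1 * \sum_(t | imbalanced s t) (Phi s - 1))).
  apply: ler_wpM2l; first by rewrite invr_ge0 ler0n.
  by apply: ler_sum => t ht; apply: local_drift.
rewrite sumr_const.
have E : #|(fun i : 'I_n => odd (negs s i))| = m by [].
rewrite E -[(Phi s - 1) *+ m]mulr_natr mulrCA mulVf ?mulr1 //.
by rewrite pnatr_eq0 -lt0n.
Qed.

Lemma main_ineq n (s0 : labeling n) K : (1 < n)%N ->
  \sum_(k < K) tail_prob p s0 k + \sum_(s : labeling n) dist p s0 K s * Phi s <= Phi s0.
Proof.
move=> n1; elim: K => [|K IH].
  rewrite big_ord0 add0r /=.
  under eq_bigr do rewrite ffunE eq_sym.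
  by rewrite sum_ind.
apply: le_trans IH; rewrite big_ord_recr /= -addrA lerD2l.
have -> : \sum_(s : labeling n) dist p s0 K.+1 s * Phi s =
          \sum_(s : labeling n) dist p s0 K s * (\sum_(s' : labeling n) trans p s s' * Phi s').
  under eq_bigr do rewrite ffunE big_distrl /=.
  rewrite exchange_big /=; apply: eq_bigr => s _; rewrite big_distrr /=.
  by apply: eq_bigr => s' _; rewrite mulrA.
apply: (@le_trans _ _ (tail_prob p s0 K +
   \sum_(s : labeling n) dist p s0 K s * (Phi s - (~~ balanced_state s)%:R))).
  rewrite lerD2l; apply: ler_sum => s _; apply: ler_wpM2l; first exact: dist_ge0.
  exact: trans_drift.
rewrite /tail_prob (big_mkcond (fun s => ~~ balanced_state s)) /= -big_split /=.
apply: ler_sum => s _; case: (~~ balanced_state s); rewrite /=.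
  by rewrite mulrBr mulr1 addrC subrK.
by rewrite subr0 add0r.
Qed.

End Proof.

Theorem theorem3 :
  exists (C n0 : nat), forall (R : realFieldType) (p : R), 0 < p < 1 ->
    forall n : nat, (n0 <= n)%N ->
      tauSB_le p n (C%:R * n%:R / Num.min p 2^-1).
Proof.
exists 9%N, 2%N => R p hp n hn s0 K.
have := @main_ineq R p hp n s0 K hn.
have h1 : 0 <= \sum_(s : labeling n) dist p s0 K s * @Phi R p n s.
  by apply: sumr_ge0 => s _; apply: mulr_ge0; [exact: (@dist_ge0 R p hp)|exact: (@Phi_ge0 R p hp)].
have h2 := @Phi_le R p hp n s0.
set m := Num.min p 2^-1.
case/andP: hp => hp1 hp2.
have hm0 : 0 < m by rewrite /m lt_min hp1 invr_gt0 ltr0n.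
have hm1 : m <= 1 by rewrite /m ge_min; apply/orP; left; exact: ltW.
set x := 9%:R * n%:R.
have hx0 : 0 <= x by rewrite /x mulr_ge0 // ler0n.
have hy : x / m * m = x by rewrite divfK // gt_eqF.
have : 0 <= x / m by rewrite divr_ge0 // ltW.
move: (x / m) hy => y hy hy0.
have h2' : @Phi R p n s0 <= x by rewrite /x; exact: h2.
nra.
Qed.
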